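(* Let $d\ge1$, $K\ge2$, $n\ge1$ be such that no Softmax Code in $\mathrm{OB}(d,K)$ has a rattler and no solution of the Tammes problem in $\mathrm{OB}(d,K)$ has a rattler. Then the following are equivalent: (a) every optimal solution $(\mathbf W^\star,\mathbf H^\star)$ of $\min_{\mathbf W\in\mathrm{OB}(d,K),\mathbf H\in\mathrm{OB}(d,nK)}\mathcal L_{\mathrm{HardMax}}(\mathbf W,\mathbf H)$ satisfies $\mathbf h_{k,i}^\star=\mathbf w_k^\star$ for all $i\in[n]$, $k\in[K]$; (b) $\operatorname{argmax}_{\mathbf W\in\mathrm{OB}(d,K)}\rho_{\text{one-vs-rest}}(\mathbf W)=\operatorname{argmax}_{\mathbf W\in\mathrm{OB}(d,K)}\rho_{\text{one-vs-one}}(\mathbf W)$.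
   Context: $\mathrm{OB}(d,m)$ is the set of real $d\times m$ matrices with unit-norm columns; $\mathbf W$ has columns $\mathbf w_k$, $\mathbf H$ has columns $\mathbf h_{k,i}$. $\mathcal L_{\mathrm{HardMax}}(\mathbf W,\mathbf H)=\max_k\max_i\max_{k'\ne k}\langle\mathbf w_{k'}-\mathbf w_k,\mathbf h_{k,i}\rangle$. $\operatorname{dist}(\mathbf v,\mathcal W)=\inf\{\|\mathbf v-\mathbf w\|_2:\mathbf w\in\operatorname{conv}(\mathcal W)\}$. $\rho_{\text{one-vs-rest}}(\mathbf W)=\min_k\operatorname{dist}(\mathbf w_k,\{\mathbf w_j\}_{j\ne k})$; a Softmax Code is a maximizer of it over $\mathrm{OB}(d,K)$, and a rattler of it is an index $k$ with $\operatorname{dist}(\mathbf w_k,\{\mathbf w_j\}_{j\ne k})\ne\rho_{\text{one-vs-rest}}(\mathbf W)$. $\rho_{\text{one-vs-one}}(\mathbf W)=\min_k\min_{k'\ne k}\|\mathbf w_k-\mathbf w_{k'}\|_2$; the Tammes problem is maximizing $\rho_{\text{one-vs-one}}$ over $\mathrm{OB}(d,K)$, and a rattler of a Tammes solution $\mathbf W$ is an index $k$ with $\min_{k'\ne k}\|\mathbf w_k-\mathbf w_{k'}\|_2\ne\rho_{\text{one-vs-one}}(\mathbf W)$. *)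

(* Defs.v *)
From HB Require Import structures.
From mathcomp Require Import all_boot all_order all_algebra.
From mathcomp Require Import classical_sets reals.
Set Implicit Arguments. Unset Strict Implicit. Unset Printing Implicit Defensive.
Import Order.TTheory GRing.Theory Num.Theory.
Local Open Scope classical_set_scope.
Local Open Scope ring_scope.

Section Defs.
Variable R : realType.

Definition dotv (d : nat) (u v : 'cV[R]_d) : R := \sum_(i < d) u i 0 * v i 0.
Definition norm2 (d : nat) (v : 'cV[R]_d) : R := Num.sqrt (dotv v v).

Definition OB (d m : nat) : set 'M[R]_(d, m) :=
  [set W | forall j : 'I_m, norm2 (col j W) = 1].

(* column h_{k,i} of H in OB(d, nK): the columns of H are indexed by pairs (k,i) *)
Definition hcol (d K n : nat) (H : 'M[R]_(d, K * n)) (k : 'I_K) (i : 'I_n) : 'cV[R]_d :=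
  col (mxvec_index k i) H.

Definition L_HardMax (d K n : nat) (W : 'M[R]_(d, K)) (H : 'M[R]_(d, K * n)) : R :=
  sup [set x | exists k : 'I_K, exists i : 'I_n, exists k' : 'I_K,
         k' != k /\ x = dotv (col k' W - col k W) (hcol H k i)].

Definition HardMax_optimal (d K n : nat) (W : 'M[R]_(d, K)) (H : 'M[R]_(d, K * n)) : Prop :=
  @OB d K W /\ @OB d (K * n) H /\
  forall (W' : 'M[R]_(d, K)) (H' : 'M[R]_(d, K * n)),
    @OB d K W' -> @OB d (K * n) H' -> L_HardMax W H <= L_HardMax W' H'.

Definition conv (d : nat) (I : finType) (P : pred I) (x : I -> 'cV[R]_d) : set 'cV[R]_d :=
  [set v | exists lam : I -> R, (forall j, P j -> 0 <= lam j) /\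
           \sum_(j | P j) lam j = 1 /\ v = \sum_(j | P j) lam j *: x j].

Definition dist_conv (d : nat) (v : 'cV[R]_d) (A : set 'cV[R]_d) : R :=
  inf [set norm2 (v - w) | w in A].

Definition dist_rest (d K : nat) (W : 'M[R]_(d, K)) (k : 'I_K) : R :=
  dist_conv (col k W) (conv (fun j : 'I_K => j != k) (fun j => col j W)).

Definition rho_ovr (d K : nat) (W : 'M[R]_(d, K)) : R :=
  inf [set dist_rest W k | k in [set: 'I_K]].

Definition nearest (d K : nat) (W : 'M[R]_(d, K)) (k : 'I_K) : R :=
  inf [set norm2 (col k W - col k' W) | k' in [set k' : 'I_K | k' != k]].

Definition rho_ovo (d K : nat) (W : 'M[R]_(d, K)) : R :=
  inf [set nearest W k | k in [set: 'I_K]].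

Definition argmax_OB (d K : nat) (f : 'M[R]_(d, K) -> R) : set 'M[R]_(d, K) :=
  [set W | @OB d K W /\ forall W', @OB d K W' -> f W' <= f W].

Definition softmax_code (d K : nat) := argmax_OB (@rho_ovr d K).
Definition tammes_solution (d K : nat) := argmax_OB (@rho_ovo d K).

Definition ovr_rattler (d K : nat) (W : 'M[R]_(d, K)) (k : 'I_K) : Prop :=
  dist_rest W k != rho_ovr W.
Definition ovo_rattler (d K : nat) (W : 'M[R]_(d, K)) (k : 'I_K) : Prop :=
  nearest W k != rho_ovo W.

End Defs.

(* Main.v *)
Require Import Defs.
From HB Require Import structures.
From mathcomp Require Import all_boot all_order all_algebra.
From mathcomp Require Import classical_sets reals.
From mathcomp Require Import all_classical all_reals all_analysis.
From mathcomp Require Import ring lra zify.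
Import Order.TTheory GRing.Theory Num.Theory.
Import numFieldNormedType.Exports.
Local Open Scope classical_set_scope.
Local Open Scope ring_scope.
Set Implicit Arguments. Unset Strict Implicit. Unset Printing Implicit Defensive.

Section P1.
Variable R : realType.
Implicit Types (d : nat).

Notation q v := (dotv v v).

Lemma dotvC d (u v : 'cV[R]_d) : dotv u v = dotv v u.
Proof. by rewrite /dotv; apply: eq_bigr => i _; rewrite mulrC. Qed.

Lemma dotvDl d (u v w : 'cV[R]_d) : dotv (u + v) w = dotv u w + dotv v w.
Proof. by rewrite /dotv -big_split; apply: eq_bigr => i _; rewrite mxE mulrDl. Qed.

Lemma dotvZl d a (u w : 'cV[R]_d) : dotv (a *: u) w = a * dotv u w.
Proof. by rewrite /dotv mulr_sumr; apply: eq_bigr => i _; rewrite mxE mulrA. Qed.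

Lemma dotvNl d (u w : 'cV[R]_d) : dotv (- u) w = - dotv u w.
Proof. by rewrite -scaleN1r dotvZl mulN1r. Qed.

Lemma dotvBl d (u v w : 'cV[R]_d) : dotv (u - v) w = dotv u w - dotv v w.
Proof. by rewrite dotvDl dotvNl. Qed.

Lemma dotvDr d (u v w : 'cV[R]_d) : dotv w (u + v) = dotv w u + dotv w v.
Proof. by rewrite dotvC dotvDl !(dotvC w). Qed.
Lemma dotvZr d a (u w : 'cV[R]_d) : dotv w (a *: u) = a * dotv w u.
Proof. by rewrite dotvC dotvZl dotvC. Qed.
Lemma dotvNr d (u w : 'cV[R]_d) : dotv w (- u) = - dotv w u.
Proof. by rewrite dotvC dotvNl dotvC. Qed.
Lemma dotvBr d (u v w : 'cV[R]_d) : dotv w (u - v) = dotv w u - dotv w v.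
Proof. by rewrite dotvDr dotvNr. Qed.

Lemma dotv_suml d (I : finType) (P : pred I) (F : I -> 'cV[R]_d) w :
  dotv (\sum_(j | P j) F j) w = \sum_(j | P j) dotv (F j) w.
Proof.
rewrite /dotv; under eq_bigr do rewrite summxE big_distrl.
by rewrite exchange_big.
Qed.

Lemma dotv0l d (w : 'cV[R]_d) : dotv 0 w = 0.
Proof. by rewrite /dotv big1 // => i _; rewrite mxE mul0r. Qed.

Lemma q_ge0 d (v : 'cV[R]_d) : 0 <= q v.
Proof. by rewrite /dotv sumr_ge0 // => i _; rewrite -expr2 sqr_ge0. Qed.

Lemma q_eq0 d (v : 'cV[R]_d) : q v = 0 -> v = 0.
Proof.
move=> /eqP; rewrite /dotv psumr_eq0 => [/allP H|i _]; last by rewrite -expr2 sqr_ge0.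
apply/matrixP => i j; rewrite ord1 mxE.
by have /implyP := H i (mem_index_enum _) => /(_ isT); rewrite mulf_eq0 orbb => /eqP.
Qed.

Lemma norm2_ge0 d (v : 'cV[R]_d) : 0 <= norm2 v.
Proof. exact: sqrtr_ge0. Qed.

Lemma norm2_sq d (v : 'cV[R]_d) : norm2 v ^+ 2 = q v.
Proof. by rewrite /norm2 sqr_sqrtr // q_ge0. Qed.

Lemma norm2_unit d (v : 'cV[R]_d) : norm2 v = 1 -> q v = 1.
Proof. by move=> h; rewrite -norm2_sq h expr1n. Qed.

Lemma unit_norm2 d (v : 'cV[R]_d) : q v = 1 -> norm2 v = 1.
Proof. by rewrite /norm2 => ->; rewrite sqrtr1. Qed.

Lemma qB d (u v : 'cV[R]_d) : q (u - v) = q u - 2 * dotv u v + q v.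
Proof. rewrite dotvBl !dotvBr (dotvC v u); ring. Qed.

Lemma qD d (u v : 'cV[R]_d) : q (u + v) = q u + 2 * dotv u v + q v.
Proof. rewrite dotvDl !dotvDr (dotvC v u); ring. Qed.

Lemma qZ d a (u : 'cV[R]_d) : q (a *: u) = a ^+ 2 * q u.
Proof. rewrite dotvZl dotvZr; ring. Qed.

Lemma unit_dot_le1 d (u v : 'cV[R]_d) : q u = 1 -> q v = 1 -> dotv u v <= 1.
Proof. move=> hu hv; have := q_ge0 (u - v); rewrite qB hu hv; lra. Qed.

Lemma unit_dot_ge d (u v : 'cV[R]_d) : q u = 1 -> q v = 1 -> -1 <= dotv u v.
Proof. move=> hu hv; have := q_ge0 (u + v); rewrite qD hu hv; lra. Qed.

Lemma cs_unit d (u h : 'cV[R]_d) : q h = 1 -> dotv u h <= norm2 u.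
Proof.
move=> hh; set a := dotv u h.
have : 0 <= q (u - a *: h) by exact: q_ge0.
rewrite qB qZ dotvZr hh -/a => H.
have H2 : a ^+ 2 <= q u by lra.
rewrite (le_trans (ler_norm a)) // -sqrtr_sqr /norm2 ler_sqrt //; exact: q_ge0.
Qed.

Lemma norm2_le_sq d (u : 'cV[R]_d) c : 0 <= c -> q u <= c ^+ 2 -> norm2 u <= c.
Proof. by move=> c0 h; rewrite /norm2 -(ger0_norm c0) -sqrtr_sqr ler_sqrt // sqr_ge0. Qed.

Lemma norm2_ge_sq d (u : 'cV[R]_d) c : 0 <= c -> c ^+ 2 <= q u -> c <= norm2 u.
Proof. by move=> c0 h; rewrite /norm2 -(ger0_norm c0) -sqrtr_sqr ler_sqrt // q_ge0. Qed.

Lemma norm2_gt_sq d (u : 'cV[R]_d) c : 0 <= c -> c ^+ 2 < q u -> c < norm2 u.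
Proof.
move=> c0 h; rewrite /norm2 -(ger0_norm c0) -sqrtr_sqr ltr_sqrt //.
exact: le_lt_trans (sqr_ge0 c) h.
Qed.

Lemma sq_le_of_norm2 d (u : 'cV[R]_d) c : 0 <= c -> c <= norm2 u -> c ^+ 2 <= q u.
Proof. by move=> c0 h; rewrite -norm2_sq ler_pXn2r // ?nnegrE // (le_trans c0 h). Qed.

Lemma norm2N d (u : 'cV[R]_d) : norm2 (- u) = norm2 u.
Proof. by rewrite /norm2 dotvNl dotvNr opprK. Qed.

Lemma norm2_sym d (u v : 'cV[R]_d) : norm2 (u - v) = norm2 (v - u).
Proof. by rewrite -norm2N opprB. Qed.

End P1.

Section P2.
Variable R : realType.

Lemma fin_inf (I : finType) (A : set I) (f : I -> R) :
  A !=set0 -> exists2 k, A k & inf (f @` A) = f k /\ forall i, A i -> f k <= f i.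
Proof.
case=> i0 Ai0.
have Pi0 : `[< A i0 >] by apply/asboolP.
case: (@arg_minP _ _ I i0 (fun i => `[< A i >]) f Pi0) => k /asboolP Ak Hk.
have lb : forall i, A i -> f k <= f i by move=> i Ai; apply: Hk; apply/asboolP.
exists k => //; split => //.
apply/eqP; rewrite eq_le; apply/andP; split.
- apply: ge_inf; first by exists (f k) => _ [i Ai <-]; exact: lb.
  by exists k.
- by apply: lb_le_inf; [exists (f k); exists k | move=> _ [i Ai <-]; exact: lb].
Qed.

Lemma fin_inf_le (I : finType) (A : set I) (f : I -> R) i :
  A i -> inf (f @` A) <= f i.
Proof.
move=> Ai; have [k _ [-> H]] := fin_inf f (ex_intro _ i Ai); exact: H.
Qed.

Lemma fin_inf_ge (I : finType) (A : set I) (f : I -> R) c :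
  A !=set0 -> (forall i, A i -> c <= f i) -> c <= inf (f @` A).
Proof. by move=> [i Ai] H; have [k Ak [-> _]] := fin_inf f (ex_intro _ i Ai); exact: H. Qed.

Lemma fin_inf_gt (I : finType) (A : set I) (f : I -> R) c :
  A !=set0 -> (forall i, A i -> c < f i) -> c < inf (f @` A).
Proof. by move=> [i Ai] H; have [k Ak [-> _]] := fin_inf f (ex_intro _ i Ai); exact: H. Qed.

Lemma fin_inf_lt (I : finType) (A : set I) (f : I -> R) c :
  A !=set0 -> inf (f @` A) < c -> exists2 i, A i & f i < c.
Proof. by move=> [i Ai]; have [k Ak [-> _]] := fin_inf f (ex_intro _ i Ai); exists k. Qed.

Lemma sum_abs_ge (T : finType) (g : T -> R) t : g t <= \sum_t `|g t|.
Proof.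
rewrite (bigD1 t) //= (le_trans (ler_norm _)) // lerDl sumr_ge0 // => *; exact: normr_ge0.
Qed.

End P2.

Section P3.
Variable R : realType.
Notation q v := (dotv v v).

Lemma exists_other K (k : 'I_K) : (2 <= K)%N -> exists k' : 'I_K, k' != k.
Proof.
move=> K2; have h0 : (0 < K)%N by lia. have h1 : (1 < K)%N by lia.
case: (eqVneq (nat_of_ord k) 0%N) => hk.
- exists (Ordinal h1); apply/eqP => /(congr1 val) /=; lia.
- exists (Ordinal h0); apply/eqP => /(congr1 val) /= h; rewrite -h in hk; lia.
Qed.

Lemma conv_mem d (I : finType) (P : pred I) (x : I -> 'cV[R]_d) j :
  P j -> Defs.conv P x (x j).
Proof.
move=> Pj; exists (fun i => (i == j)%:R); split; first by move=> i _; rewrite ler0n.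
split.
- by rewrite (bigD1 j) //= eqxx big1 ?addr0 // => i /andP [_ /negbTE ->].
- by rewrite (bigD1 j) //= eqxx scale1r big1 ?addr0 // => i /andP [_ /negbTE ->]; rewrite scale0r.
Qed.

Lemma conv_comb d (I : finType) (P : pred I) (x : I -> 'cV[R]_d) y1 y2 t :
  Defs.conv P x y1 -> Defs.conv P x y2 -> 0 <= t <= 1 -> Defs.conv P x (y1 + t *: (y2 - y1)).
Proof.
move=> [l1 [l1p [l1s ->]]] [l2 [l2p [l2s ->]]] /andP [t0 t1].
exists (fun i => (1 - t) * l1 i + t * l2 i); split.
  by move=> i Pi; rewrite addr_ge0 // mulr_ge0 // ?subr_ge0 // ?l1p ?l2p.
split; first by rewrite big_split /= -!mulr_sumr l1s l2s; ring.
under [RHS]eq_bigr do rewrite scalerDl -!scalerA.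
rewrite big_split /= -!scaler_sumr scalerBl scale1r scalerBr.
by rewrite addrCA addrC.
Qed.

Lemma dist_ge0 d (v : 'cV[R]_d) A : A !=set0 -> 0 <= dist_conv v A.
Proof.
move=> [y Ay]; apply: lb_le_inf; first by exists (norm2 (v - y)), y.
by move=> _ [z Az <-]; exact: norm2_ge0.
Qed.

Lemma dist_le d (v : 'cV[R]_d) A y : A y -> dist_conv v A <= norm2 (v - y).
Proof.
move=> Ay; apply: ge_inf; last by exists y.
by exists 0 => _ [z Az <-]; exact: norm2_ge0.
Qed.

Lemma dist_lt d (v : 'cV[R]_d) A r : A !=set0 -> dist_conv v A < r ->
  exists2 y, A y & norm2 (v - y) < r.
Proof.
move=> [y0 Ay0] /inf_lt [|_ [y Ay <-] h]; first by exists (norm2 (v - y0)), y0.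
by exists y.
Qed.

Lemma dist_ge d (v : 'cV[R]_d) A c : A !=set0 ->
  (forall y, A y -> c <= norm2 (v - y)) -> c <= dist_conv v A.
Proof.
move=> [y0 Ay0] H; apply: lb_le_inf; first by exists (norm2 (v - y0)), y0.
by move=> _ [z Az <-]; exact: H.
Qed.

Definition crest d K (W : 'M[R]_(d, K)) (k : 'I_K) :=
  Defs.conv (fun j : 'I_K => j != k) (fun j => col j W).

Lemma crest_ne d K (W : 'M[R]_(d, K)) k : (2 <= K)%N -> crest W k !=set0.
Proof. move=> K2; have [j hj] := exists_other k K2; exists (col j W); exact: conv_mem. Qed.

Lemma weak_dual d K (W : 'M[R]_(d, K)) k h m : (2 <= K)%N -> q h = 1 ->
  (forall j, j != k -> m <= dotv (col k W - col j W) h) -> m <= dist_rest W k.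
Proof.
move=> K2 hh H; apply: dist_ge; first exact: crest_ne.
move=> _ [l [lp [ls ->]]].
apply: le_trans (cs_unit _ hh).
have -> : col k W - \sum_(j | j != k) l j *: col j W =
          \sum_(j | j != k) l j *: (col k W - col j W).
  rewrite -{1}(scale1r (col k W)) -ls scaler_suml -sumrB.
  by apply: eq_bigr => j _; rewrite scalerBr.
rewrite dotv_suml.
apply: le_trans (_ : \sum_(j | j != k) l j * m <= _).
  by rewrite -mulr_suml ls mul1r.
by apply: ler_sum => j hj; rewrite dotvZl ler_wpM2l // ?lp // H.
Qed.

Lemma rho_ovr_le d K (W : 'M[R]_(d, K)) k : rho_ovr W <= dist_rest W k.
Proof. exact: fin_inf_le. Qed.

Lemma rho_ovr_attained d K (W : 'M[R]_(d, K)) : (0 < K)%N ->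
  exists k, rho_ovr W = dist_rest W k.
Proof.
move=> K0; have [|k _ [E _]] := @fin_inf _ _ [set: 'I_K] (dist_rest W).
  by exists (Ordinal K0).
by exists k; rewrite /rho_ovr E.
Qed.

Lemma rho_ovr_ge0 d K (W : 'M[R]_(d, K)) : (2 <= K)%N -> 0 <= rho_ovr W.
Proof.
move=> K2; have [k ->] := rho_ovr_attained W (ltn_trans (isT : (0 < 1)%N) K2).
exact/dist_ge0/crest_ne.
Qed.

Lemma nearest_le d K (W : 'M[R]_(d, K)) k k' : k' != k ->
  nearest W k <= norm2 (col k W - col k' W).
Proof. by move=> h; apply: (@fin_inf_le _ _ [set k' | k' != k]). Qed.

Lemma nearest_attained d K (W : 'M[R]_(d, K)) k : (2 <= K)%N ->
  exists2 k', k' != k & nearest W k = norm2 (col k W - col k' W).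
Proof.
move=> K2; have [j hj] := exists_other k K2.
have [k' hk' [E _]] := fin_inf (fun k' => norm2 (col k W - col k' W))
   (ex_intro [set k' | k' != k] j hj).
by exists k' => //; rewrite /nearest E.
Qed.

Lemma rho_ovo_le d K (W : 'M[R]_(d, K)) k : rho_ovo W <= nearest W k.
Proof. exact: fin_inf_le. Qed.

Lemma rho_ovo_ge d K (W : 'M[R]_(d, K)) c : (2 <= K)%N ->
  (forall k k', k' != k -> c <= norm2 (col k W - col k' W)) -> c <= rho_ovo W.
Proof.
move=> K2 H; have K0 : (0 < K)%N by lia.
apply: fin_inf_ge; first by exists (Ordinal K0).
move=> k _; have [j hj] := exists_other k K2.
by apply: fin_inf_ge; [exists j | move=> k' hk'; exact: H].
Qed.

Lemma rho_ovo_ge0 d K (W : 'M[R]_(d, K)) : (2 <= K)%N -> 0 <= rho_ovo W.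
Proof. by move=> K2; apply: rho_ovo_ge => // *; exact: norm2_ge0. Qed.

Lemma rho_ovo_le_pair d K (W : 'M[R]_(d, K)) k k' : k' != k ->
  rho_ovo W <= norm2 (col k W - col k' W).
Proof. by move=> h; apply: le_trans (rho_ovo_le W k) (nearest_le W h). Qed.

Lemma L_ub d K n (W : 'M[R]_(d, K)) (H : 'M[R]_(d, K * n)) k i k' : k' != k ->
  dotv (col k' W - col k W) (hcol H k i) <= L_HardMax W H.
Proof.
move=> hk; apply: ub_le_sup; last by exists k, i, k'.
exists (\sum_(t : 'I_K * 'I_n * 'I_K) `|dotv (col t.2 W - col t.1.1 W) (hcol H t.1.1 t.1.2)|).
move=> _ [a [b [c [_ ->]]]].
exact: (sum_abs_ge (fun t : 'I_K * 'I_n * 'I_K =>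
   dotv (col t.2 W - col t.1.1 W) (hcol H t.1.1 t.1.2)) (a, b, c)).
Qed.

Lemma L_le d K n (W : 'M[R]_(d, K)) (H : 'M[R]_(d, K * n)) c :
  (2 <= K)%N -> (0 < n)%N ->
  (forall k i k', k' != k -> dotv (col k' W - col k W) (hcol H k i) <= c) ->
  L_HardMax W H <= c.
Proof.
move=> K2 n0 Hc; have K0 : (0 < K)%N by lia.
have [j hj] := exists_other (Ordinal K0) K2.
apply: ge_sup.
  by exists (dotv (col j W - col (Ordinal K0) W) (hcol H (Ordinal K0) (Ordinal n0))),
    (Ordinal K0), (Ordinal n0), j.
by move=> _ [a [b [e [he ->]]]]; exact: Hc.
Qed.

End P3.

Section P4.
Variable R : realType.
Notation q v := (dotv v v).

Lemma OB_col d K (W : 'M[R]_(d, K)) k : OB W -> q (col k W) = 1.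
Proof. by move=> hW; apply: norm2_unit; exact: hW. Qed.

Lemma dot_diff_self d (u v : 'cV[R]_d) : q u = 1 -> q v = 1 ->
  dotv (u - v) u = q (u - v) / 2.
Proof. move=> hu hv; rewrite qB dotvBl hu hv (dotvC v u); by field. Qed.

Lemma q_add_le d (u v : 'cV[R]_d) : q (u + v) <= 2 * q u + 2 * q v.
Proof. have := q_ge0 (u - v); rewrite qB qD; lra. Qed.

Lemma unit_diff_le2 d (u v : 'cV[R]_d) : q u = 1 -> q v = 1 -> q (u - v) <= 4.
Proof. move=> hu hv; have := unit_dot_ge hu hv; rewrite qB hu hv; lra. Qed.

Lemma dotv_opp_diff d (u v h : 'cV[R]_d) : dotv (v - u) h = - dotv (u - v) h.
Proof. by rewrite -dotvNl opprB. Qed.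

Lemma approx_dual1 d K (W : 'M[R]_(d, K)) k e : (2 <= K)%N -> OB W ->
  0 < e -> e <= 1 -> exists h, q h = 1 /\
  forall j, j != k -> dist_rest W k - e <= dotv (col k W - col j W) h.
Proof.
move=> K2 hW e0 e1.
pose wk := col k W.
have hk : q wk = 1 by exact: OB_col.
pose D0 := dist_rest W k.
have D00 : 0 <= D0 by exact/dist_ge0/crest_ne.
have [De|eD] := leP D0 e.
  exists wk; split => // j hj.
  rewrite dot_diff_self //; last exact: OB_col.
  have := q_ge0 (wk - col j W); lra.
pose del := e ^+ 3 / 52.
have del0 : 0 < del by rewrite /del divr_gt0 // exprn_gt0.
have e2 : e ^+ 2 <= 1 by rewrite -(expr1n _ 2) ler_pXn2r // ?nnegrE; lra.
have e3 : e ^+ 3 <= e.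
  have : e * e ^+ 2 <= e * 1 by rewrite ler_wpM2l // ltW.
  by rewrite mulr1 -exprS.
have dele : del <= e by rewrite /del ler_pdivrMr //; lra.
have yy : D0 < D0 + del by rewrite ltrDl.
have [y Cy yD] := dist_lt (crest_ne W k K2) yy.
pose D := norm2 (wk - y).
have yD' : D < D0 + del := yD.
have D0D : D0 <= D by exact: dist_le.
have D0' : 0 < D by lra.
pose a := wk - y.
have qa : q a = D ^+ 2 by rewrite /D norm2_sq.
exists (D^-1 *: a); split.
  by rewrite qZ qa exprVn mulVf // expf_neq0 // gt_eqF.
move=> j hj.
pose wj := col j W.
have hj1 : q wj = 1 by exact: OB_col.
pose b := wj - y.
pose t := e ^+ 2 / 26.
have t0 : 0 <= t by rewrite /t divr_ge0 // sqr_ge0.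
have t1 : t <= 1 by rewrite /t ler_pdivrMr //; lra.
have Cz : crest W k (y + t *: (wj - y)).
  by apply: conv_comb => //; [exact: conv_mem | apply/andP].
have H1 : D0 ^+ 2 <= D ^+ 2 - 2 * t * dotv a b + t ^+ 2 * q b.
  have := dist_le wk Cz; rewrite -/D0 => h.
  have := sq_le_of_norm2 D00 h.
  have -> : wk - (y + t *: (wj - y)) = a - t *: b by rewrite opprD addrA.
  by rewrite qB qZ dotvZr qa mulrA.
have H2 : (D - del) ^+ 2 <= D0 ^+ 2.
  by rewrite ler_pXn2r // ?nnegrE //; lra.
have Dle : D <= 3.
  have : D0 <= norm2 (wk - wj) by apply: dist_le; exact: conv_mem.
  have : norm2 (wk - wj) <= 2.
    by apply: norm2_le_sq => //; rewrite (le_trans (unit_diff_le2 hk hj1)) //; lra.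
  lra.
have H3 : q b <= 26.
  have -> : b = (wj - wk) + a by rewrite /a /b addrA subrK.
  apply: le_trans (q_add_le _ _) _.
  have := unit_diff_le2 hj1 hk.
  have : D ^+ 2 <= 9 by rewrite (_ : 9 = 3 ^+ 2); [rewrite ler_pXn2r // ?nnegrE; lra | lra].
  rewrite qa; lra.
set p := dotv a b in H1 *.
have H4 : 2 * t * p <= 2 * D * del + 26 * t ^+ 2.
  have : t ^+ 2 * q b <= t ^+ 2 * 26 by rewrite ler_wpM2l // sqr_ge0.
  have : (D - del) ^+ 2 = D ^+ 2 - 2 * D * del + del ^+ 2 by ring.
  have := sqr_ge0 del.
  lra.
have H5 : 2 * p <= D * e + e ^+ 2.
  have E : e ^+ 2 * (2 * p - D * e - e ^+ 2) = 26 * (2 * t * p - 2 * D * del - 26 * t ^+ 2).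
    by rewrite /t /del; field.
  have : e ^+ 2 * (2 * p - D * e - e ^+ 2) <= 0 by rewrite E; nra.
  rewrite pmulr_rle0 ?exprn_gt0 //; lra.
have H6 : p <= e * D by nra.
have -> : col k W - col j W = a - b by rewrite /a /b opprB addrA subrK.
rewrite dotvZr dotvBl qa (dotvC b a) -/p.
have -> : D^-1 * (D ^+ 2 - p) = D - p / D by field; rewrite gt_eqF.
have : p / D <= e by rewrite ler_pdivrMr.
lra.
Qed.

Lemma approx_dual d K (W : 'M[R]_(d, K)) k e : (2 <= K)%N -> OB W ->
  0 < e -> exists h, q h = 1 /\
  forall j, j != k -> dist_rest W k - e <= dotv (col k W - col j W) h.
Proof.
move=> K2 hW e0.
have em : 0 < Num.min e 1 by rewrite lt_min e0 ltr01.
have em1 : Num.min e 1 <= 1 by rewrite ge_min lexx orbT.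
have [h [hh H]] := approx_dual1 k K2 hW em em1.
exists h; split => // j hj; apply: le_trans (H j hj).
by rewrite lerD2l lerN2 ge_min lexx.
Qed.

End P4.

Section P5.
Variable R : realType.
Notation q v := (dotv v v).

Lemma uniq_dual d K (W : 'M[R]_(d, K)) k h1 h2 : (2 <= K)%N ->
  0 < dist_rest W k -> q h1 = 1 -> q h2 = 1 ->
  (forall j, j != k -> dist_rest W k <= dotv (col k W - col j W) h1) ->
  (forall j, j != k -> dist_rest W k <= dotv (col k W - col j W) h2) ->
  h1 = h2.
Proof.
move=> K2 s0 q1 q2 H1 H2.
set s := dist_rest W k in s0 H1 H2 *.
apply/eqP/negPn/negP => neq.
have c1 : dotv h1 h2 < 1.
  have : q (h1 - h2) != 0 by apply/eqP => /q_eq0 /eqP; rewrite subr_eq0 (negbTE neq).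
  have := q_ge0 (h1 - h2); rewrite qB q1 q2 => a b.
  have : 0 < 1 - 2 * dotv h1 h2 + 1 by rewrite lt_neqAle eq_sym b a.
  lra.
pose m := 2^-1 *: (h1 + h2).
have Hm : forall j, j != k -> s <= dotv (col k W - col j W) m.
  move=> j hj; rewrite dotvZr dotvDr.
  have := H1 j hj; have := H2 j hj; lra.
have qm : q m = (1 + dotv h1 h2) / 2.
  by rewrite qZ qD q1 q2; field.
have qm1 : q m < 1 by rewrite qm; lra.
have [j hj] := exists_other k K2.
have qm0 : 0 < q m.
  rewrite lt_neqAle q_ge0 andbT; apply/eqP => /esym/q_eq0 m0.
  have := Hm j hj; rewrite m0 dotvC dotv0l; lra.
pose N := norm2 m.
have N0 : 0 < N by rewrite /N /norm2 sqrtr_gt0.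
have N1 : N < 1 by rewrite /N /norm2 -sqrtr1 ltr_sqrt.
have qh : q (N^-1 *: m) = 1.
  by rewrite qZ -norm2_sq -/N exprVn mulVf // expf_neq0 // gt_eqF.
have := weak_dual (W := W) (k := k) (m := s / N) K2 qh.
have H : forall j, j != k -> s / N <= dotv (col k W - col j W) (N^-1 *: m).
  move=> j' hj'; rewrite dotvZr mulrC ler_pM2l ?invr_gt0 //; exact: Hm.
move=> /(_ H); rewrite -/s ler_pdivrMr // => h.
have : s * N < s * 1 by rewrite ltr_pM2l.
lra.
Qed.

Lemma ovo_le_ovr d K (W : 'M[R]_(d, K)) : (2 <= K)%N -> OB W ->
  rho_ovo W ^+ 2 / 2 <= rho_ovr W.
Proof.
move=> K2 hW; have [k ->] := rho_ovr_attained W (ltn_trans (isT : (0 < 1)%N) K2).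
apply: (weak_dual (h := col k W)) => //; first exact: OB_col.
move=> j hj; rewrite dot_diff_self; [|exact: OB_col|exact: OB_col].
rewrite ler_pM2r // ?invr_gt0 //.
apply: sq_le_of_norm2; first exact: rho_ovo_ge0.
exact: rho_ovo_le_pair.
Qed.

Lemma L_lower d K n (W : 'M[R]_(d, K)) (H : 'M[R]_(d, K * n)) :
  (2 <= K)%N -> (0 < n)%N -> OB W -> OB H -> - rho_ovr W <= L_HardMax W H.
Proof.
move=> K2 n0 hW hH; have [k ->] := rho_ovr_attained W (ltn_trans (isT : (0 < 1)%N) K2).
rewrite lerNl; apply: (weak_dual (h := hcol H k (Ordinal n0))) => //.
  exact: (OB_col _ hH).
move=> j hj; rewrite lerNl -dotv_opp_diff; exact: L_ub.
Qed.

Definition mkH d K n (f : 'I_K -> 'cV[R]_d) : 'M[R]_(d, K * n) :=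
  \matrix_(r < d, c < K * n) (mxvec (\matrix_(k < K, i < n) f k r 0)) 0 c.
Arguments mkH {d K} n f.

Lemma mkH_col d K n (f : 'I_K -> 'cV[R]_d) k i : hcol (mkH n f) k i = f k.
Proof. by apply/matrixP => r c; rewrite ord1 !mxE mxvecE mxE. Qed.

Lemma mkH_OB d K n (f : 'I_K -> 'cV[R]_d) : (forall k, q (f k) = 1) -> OB (mkH n f).
Proof.
move=> hf c; case/mxvec_indexP: c => k i.
by have := mkH_col f k i; rewrite /hcol => ->; apply: unit_norm2.
Qed.

Lemma mkH_L d K n (W : 'M[R]_(d, K)) (f : 'I_K -> 'cV[R]_d) s :
  (2 <= K)%N -> (0 < n)%N ->
  (forall k j, j != k -> s <= dotv (col k W - col j W) (f k)) ->
  L_HardMax W (mkH n f) <= - s.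
Proof.
move=> K2 n0 hf; apply: L_le => // k i k' hk.
by rewrite mkH_col dotv_opp_diff lerN2; exact: hf.
Qed.

End P5.

Section P6.
Variable R : realType.
Notation q v := (dotv v v).

Definition repcol d K (W : 'M[R]_(d, K)) (k : 'I_K) (v : 'cV[R]_d) : 'M[R]_(d, K) :=
  \matrix_(i, j) if j == k then v i 0 else W i j.

Lemma repcol_col d K (W : 'M[R]_(d, K)) k v j :
  col j (repcol W k v) = if j == k then v else col j W.
Proof.
apply/matrixP => i c; rewrite ord1 !mxE; case: (j == k) => //; by rewrite mxE.
Qed.

Lemma not_ovo_rattler d K (W : 'M[R]_(d, K)) k :
  ~ ovo_rattler W k -> nearest W k = rho_ovo W.
Proof. by move=> H; apply/eqP; apply/negPn/negP. Qed.

Lemma not_ovr_rattler d K (W : 'M[R]_(d, K)) k :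
  ~ ovr_rattler W k -> dist_rest W k = rho_ovr W.
Proof. by move=> H; apply/eqP; apply/negPn/negP. Qed.

Lemma perturb d K (W : 'M[R]_(d, K)) k h S : (2 <= K)%N ->
  tammes_solution W ->
  (forall W' : 'M[R]_(d, K), tammes_solution W' -> forall k, ~ ovo_rattler W' k) ->
  q h = 1 -> rho_ovo W ^+ 2 / 2 < S ->
  (forall j, j != k -> S <= dotv (col k W - col j W) h) -> False.
Proof.
move=> K2 [hW Wmax] noR hh TS HS.
pose T := rho_ovo W.
have T0 : 0 <= T by exact: rho_ovo_ge0.
pose wk := col k W.
have hk : q wk = 1 by exact: OB_col.
pose a := 1 - T ^+ 2 / 2.
pose c := dotv wk h.
have c1 : c <= 1 by exact: unit_dot_le1.
have cm1 : -1 <= c by exact: unit_dot_ge.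
pose g := S - c * (T ^+ 2 / 2).
have g0 : 0 < g.
  have : c * (T ^+ 2 / 2) <= T ^+ 2 / 2.
    by rewrite ler_piMl // divr_ge0 // sqr_ge0.
  rewrite /g -/T in TS *; lra.
pose A := `|a| + 1.
have A1 : 1 <= A by rewrite /A lerDr.
pose t := g / (A + g).
have t0 : 0 < t by rewrite /t divr_gt0 //; lra.
have t1 : t < 1 by rewrite /t ltr_pdivrMr; lra.
have tA : t * A < g.
  rewrite /t mulrAC ltr_pdivrMr; last by lra.
  have : 0 < g * g by rewrite mulr_gt0.
  nra.
pose u := wk + t *: h.
have qu : q u = 1 + 2 * t * c + t ^+ 2.
  by rewrite qD qZ dotvZr hk hh -/c; ring.
pose N := norm2 u.
have N0 : 0 <= N by exact: norm2_ge0.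
have key : a + t * (c - S) < a * N.
  have [a0|a0] := leP 0 a.
  - have NL : 1 + t * c <= N.
      have [hc|hc] := leP (1 + t * c) 0; first by lra.
      apply: norm2_ge_sq; first lra.
      rewrite qu.
      have : c ^+ 2 <= 1 by nra.
      move=> c2; nra.
    have : a * (1 + t * c) <= a * N by rewrite ler_wpM2l.
    have : t * (c * (1 - a) - S) < 0.
      rewrite pmulr_rlt0 // (_ : 1 - a = T ^+ 2 / 2); last by rewrite /a; ring.
      rewrite /g in g0; lra.
    nra.
  - have NU : N <= 1 + t * c + t ^+ 2 / 2.
      apply: norm2_le_sq; first by nra.
      rewrite qu.
      have E : (1 + t * c + t ^+ 2 / 2) ^+ 2 - (1 + 2 * t * c + t ^+ 2)
               = t ^+ 2 * (c + t / 2) ^+ 2 by field.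
      have : 0 <= t ^+ 2 * (c + t / 2) ^+ 2 by rewrite mulr_ge0 // sqr_ge0.
      lra.
    have : a * (1 + t * c + t ^+ 2 / 2) <= a * N by rewrite ler_wnM2l //; lra.
    have Aa : A = - a + 1 by rewrite /A ltr0_norm.
    have : t * (c * (1 - a) - S - a * t / 2) < 0.
      rewrite pmulr_rlt0 // (_ : 1 - a = T ^+ 2 / 2); last by rewrite /a; ring.
      rewrite /g in g0 tA; rewrite Aa in tA.
      nra.
    nra.
have Hj : forall j, j != k -> dotv u (col j W) < a * N.
  move=> j hj; apply: le_lt_trans key.
  have hj1 : q (col j W) = 1 by exact: OB_col.
  have Hw : dotv wk (col j W) <= a.
    have : T <= norm2 (wk - col j W) by exact: rho_ovo_le_pair.
    move/(sq_le_of_norm2 T0); rewrite qB hk hj1 /a; lra.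
  have Hh : dotv h (col j W) <= c - S.
    have := HS j hj; rewrite dotvBl (dotvC (col j W) h) -/wk -/c; lra.
  rewrite /u dotvDl dotvZl.
  have : t * dotv h (col j W) <= t * (c - S) by rewrite ler_wpM2l // ltW.
  lra.
have [j0 hj0] := exists_other k K2.
have Npos : 0 < N.
  rewrite lt_neqAle N0 andbT; apply/eqP => N00.
  have := Hj j0 hj0; rewrite -N00 mulr0.
  have : q u = 0 by rewrite -norm2_sq -/N -N00 expr0n.
  move/q_eq0 => ->; rewrite dotv0l ltxx; done.
pose v := N^-1 *: u.
have qv : q v = 1 by rewrite qZ -norm2_sq -/N exprVn mulVf // expf_neq0 // gt_eqF.
have Hv : forall j, j != k -> T < norm2 (v - col j W).
  move=> j hj; apply: norm2_gt_sq => //.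
  have hj1 : q (col j W) = 1 by exact: OB_col.
  rewrite qB qv hj1 dotvZl.
  have : N^-1 * dotv u (col j W) < a.
    by rewrite mulrC ltr_pdivrMr //; exact: Hj.
  rewrite /a; lra.
pose W' := repcol W k v.
have hW' : OB W'.
  move=> j; rewrite repcol_col; case: (j == k); first exact: unit_norm2.
  exact: hW.
have TW' : T <= rho_ovo W'.
  apply: rho_ovo_ge => // k1 k2 hk12; rewrite !repcol_col.
  case: (eqVneq k1 k) => [E | h1].
    by rewrite E in hk12; rewrite (negbTE hk12) ltW ?Hv.
  case: (eqVneq k2 k) => [E2 | h2].
    by rewrite norm2_sym ltW // Hv.
  exact: rho_ovo_le_pair.
have tW' : tammes_solution W'.
  (split; [exact: hW' | move=> W'' hW''; exact: le_trans (Wmax W'' hW'') TW']).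
have E0 := not_ovo_rattler (noR W' tW' k).
have [k' hk' E1] := nearest_attained W' k K2.
have E2 : norm2 (col k W' - col k' W') = norm2 (v - col k' W).
  by rewrite /W' !repcol_col eqxx (negbTE hk').
have E3 := Hv k' hk'.
have E4 := Wmax W' hW'.
rewrite -/T in E4.
rewrite E0 in E1. rewrite E1 E2 in E4.
by move: E3; rewrite ltNge E4.
Qed.

End P6.

Section P7.
Variable R : realType.
Notation q v := (dotv v v).

Lemma vec_mx_cont m n : continuous (@vec_mx R m n).
Proof.
move=> x A /nbhs_ballP [e e0 H]; apply/nbhs_ballP; exists e => // y [_ bxy].
by apply: H; split => // i j; rewrite !mxE; exact: bxy.
Qed.

Lemma mx_compact m n (A : set 'M[R]_(m, n)) :
  (forall x, A x -> forall i j, `|x i j| <= 1) -> closed A -> compact A.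
Proof.
move=> bA cA.
pose B := (@vec_mx R m n) @^-1` A.
have cB : closed B by apply: preimage_closed => // x _; exact: vec_mx_cont.
have bB : bounded_set B.
  exists 1; split; first exact: num_real.
  move=> M M1 x Bx /=; rewrite /Num.norm /= mx_normrE; apply: bigmax_le; first lra.
  move=> [i j] _ /=; apply: le_trans (ltW M1).
  rewrite (ord1 i); case/mxvec_indexP: j => a b.
  by have := bA _ Bx a b; rewrite mxE.
have cpB : compact B := bounded_closed_compact bB cB.
have -> : A = vec_mx @` B.
  apply/seteqP; split.
  - by move=> x Ax; exists (mxvec x); rewrite /B /= mxvecK.
  - by move=> _ [y By <-].
exact: continuous_compact (continuous_subspaceT (@vec_mx_cont m n)) cpB.
Qed.

Lemma usc_max (T : topologicalType) (A : set T) (f : T -> R) B :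
  compact A -> A !=set0 -> (forall x, A x -> f x <= B) ->
  (forall x r, f x < r -> nbhs x [set y | f y < r]) ->
  exists2 x, A x & forall y, A y -> f y <= f x.
Proof.
move=> cA [x0 Ax0] fB usc.
pose s := sup (f @` A).
have hs : has_sup (f @` A).
  by split; [exists (f x0), x0 | exists B => _ [y Ay <-]; exact: fB].
pose F := filter_from [set r | r < s] (fun r => A `&` [set y | r < f y]).
have FF : ProperFilter F.
  apply: filter_from_proper.
    apply: filter_from_filter.
      by exists (s - 1); rewrite /= ltrBlDr ltrDl.
    move=> r1 r2 h1 h2; exists (Num.max r1 r2); first by rewrite /= gt_max h1 h2.
    by move=> y [Ay]; rewrite /= gt_max => /andP [a b].
  move=> r rs.
  have sr : 0 < s - r by rewrite subr_gt0.
  have [_ [y Ay <-] hy] := sup_adherent sr hs.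
  by exists y; split => //=; move: hy; rewrite opprB addrCA subrr addr0.
have FA : F A by exists (s - 1); [rewrite /= ltrBlDr ltrDl | move=> y []].
have [x [Ax clx]] := cA F FF FA.
exists x => // y Ay.
apply: le_trans (_ : s <= f x); first by apply: sup_upper_bound => //; exists y.
rewrite leNgt; apply/negP => fxs.
pose r := (f x + s) / 2.
have hr1 : f x < r by rewrite /r; lra.
have hr2 : r < s by rewrite /r; lra.
have FAr : F (A `&` [set y | r < f y]) by exists r.
have [z [[_ rz] zr]] := clx _ _ FAr (usc x r hr1).
by rewrite /= in zr rz; lra.
Qed.

End P7.

Section P8.
Variable R : realType.
Notation q v := (dotv v v).

Lemma cont_sum (T : topologicalType) (I : Type) (s : seq I) (P : pred I)
    (F : I -> T -> R) :
  (forall i, continuous (F i)) -> continuous (fun x => \sum_(i <- s | P i) F i x).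
Proof.
move=> hF; elim: s => [|a s IH].
  have -> : (fun x => \sum_(i <- [::] | P i) F i x) = (fun=> 0).
    by apply: funext => x; rewrite big_nil.
  exact: cst_continuous.
have -> : (fun x => \sum_(i <- a :: s | P i) F i x) =
          (fun x => if P a then F a x + \sum_(i <- s | P i) F i x
                    else \sum_(i <- s | P i) F i x).
  by apply: funext => x; rewrite big_cons.
case: (P a) => //= x.
exact: (@continuousD _ _ _ (F a) (fun x => \sum_(i <- s | P i) F i x) x (hF a x) (IH x)).
Qed.

Lemma cont_dot (T : topologicalType) d (u v : T -> 'cV[R]_d) :
  (forall i, continuous (fun x => u x i 0)) ->
  (forall i, continuous (fun x => v x i 0)) ->
  continuous (fun x => dotv (u x) (v x)).
Proof.
move=> hu hv; rewrite /dotv.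
apply: (@cont_sum T _ _ _ (fun i x => u x i 0 * v x i 0)) => i x.
exact: (@continuousM _ _ (fun x => u x i 0) (fun x => v x i 0) x (hu i x) (hv i x)).
Qed.

Lemma cont_norm2 (T : topologicalType) d (u : T -> 'cV[R]_d) :
  (forall i, continuous (fun x => u x i 0)) -> continuous (fun x => norm2 (u x)).
Proof.
move=> hu x; rewrite /norm2.
apply: (continuous_comp (f := fun x => dotv (u x) (u x))); [exact: cont_dot | exact: sqrt_continuous].
Qed.

Lemma cont_colentry d K (j : 'I_K) i :
  continuous (fun W : 'M[R]_(d, K) => col j W i 0).
Proof.
have -> : (fun W : 'M[R]_(d, K) => col j W i 0) = (fun W => W i j).
  by apply: funext => W; rewrite mxE.
exact: coord_continuous.
Qed.

Lemma cont_lt (T : topologicalType) (f : T -> R) x r :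
  continuous f -> f x < r -> nbhs x [set y | f y < r].
Proof. by move=> cf fr; exact: (cf x _ (lt_nbhsl fr)). Qed.

Lemma entry_le1 d (v : 'cV[R]_d) i : q v = 1 -> `|v i 0| <= 1.
Proof.
move=> hv.
have h2 : v i 0 ^+ 2 <= 1.
  rewrite -hv /dotv (bigD1 i) //= -expr2 lerDl.
  by apply: sumr_ge0 => k _; rewrite -expr2 sqr_ge0.
rewrite -(real_normK (num_real (v i 0))) in h2.
by rewrite -(@ler_pXn2r _ 2) ?nnegrE ?normr_ge0 // expr1n.
Qed.

Lemma OB_closed d K : closed (@OB R d K).
Proof.
have -> : @OB R d K = \bigcap_(j in [set: 'I_K])
    ((fun W : 'M[R]_(d, K) => norm2 (col j W)) @^-1` [set x | x = 1]).
  by apply/seteqP; split => [W hW j _ | W hW j]; [exact: hW | exact: hW j I].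
apply: closed_bigI => j _; apply: preimage_closed; last exact: closed_eq.
by move=> W _; apply: cont_norm2 => i; exact: cont_colentry.
Qed.

Lemma OB_entries d K (W : 'M[R]_(d, K)) : OB W -> forall i j, `|W i j| <= 1.
Proof. by move=> hW i j; have := entry_le1 i (OB_col j hW); rewrite mxE. Qed.

Lemma sphere_closed d : closed [set h : 'M[R]_(d, 1) | q h = 1].
Proof.
apply: (@preimage_closed _ _ (fun h : 'M[R]_(d, 1) => q h) [set x | x = 1]).
  by move=> h _; apply: cont_dot => i; exact: coord_continuous.
exact: closed_eq.
Qed.

Definition unitv d (i0 : 'I_d) : 'cV[R]_d := delta_mx i0 0.

Lemma unitv_q d (i0 : 'I_d) : q (unitv i0) = 1.
Proof.
rewrite /dotv (bigD1 i0) //= big1 ?addr0 => [|i hi]; first by rewrite !mxE !eqxx mulr1.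
by rewrite !mxE (negbTE hi) mul0r.
Qed.

End P8.

Section P9.
Variable R : realType.
Notation q v := (dotv v v).

Lemma OB_nonempty d K : (0 < d)%N -> (@OB R d K) !=set0.
Proof.
move=> d0; pose e := @unitv R _ (Ordinal d0).
exists (\matrix_(i < d, j < K) e i 0) => j.
apply: unit_norm2; rewrite -(@unitv_q R _ (Ordinal d0)) -/e; congr dotv;
  by apply/matrixP => i c; rewrite ord1 !mxE.
Qed.

Lemma rho_ovr_usc d K (W : 'M[R]_(d, K)) r : (2 <= K)%N ->
  rho_ovr W < r -> nbhs W [set W' | rho_ovr W' < r].
Proof.
move=> K2 hr; have K0 : (0 < K)%N by lia.
have [k Ek] := rho_ovr_attained W K0.
rewrite Ek in hr.
have [y [l [lp [ls ->]]] hy] := dist_lt (crest_ne W k K2) hr.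
pose phi := fun W' : 'M[R]_(d, K) =>
  norm2 (col k W' - \sum_(j | j != k) l j *: col j W').
have cphi : continuous phi.
  apply: cont_norm2 => i.
  have -> : (fun W' : 'M[R]_(d, K) => (col k W' - \sum_(j | j != k) l j *: col j W') i 0)
    = (fun W' => W' i k - \sum_(j | j != k) l j * W' i j).
    apply: funext => W'; rewrite !mxE summxE; congr (_ - _).
    by apply: eq_bigr => j _; rewrite !mxE.
  move=> W'.
  apply: (@continuousB _ _ _ (fun W' : 'M[R]_(d, K) => W' i k)
     (fun W' => \sum_(j | j != k) l j * W' i j)).
    exact: coord_continuous.
  apply: (cont_sum (F := fun j (W' : 'M[R]_(d, K)) => l j * W' i j)) => j x.
  apply: (@continuousM _ _ (fun=> l j) (fun W' : 'M[R]_(d, K) => W' i j)).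
    exact: cst_continuous.
  exact: coord_continuous.
apply: filterS (cont_lt cphi hy) => W' /= hW'.
apply: le_lt_trans (rho_ovr_le W' k) _.
apply: le_lt_trans hW'.
by apply: dist_le; exists l.
Qed.

Lemma exists_softmax d K : (0 < d)%N -> (2 <= K)%N ->
  exists W : 'M[R]_(d, K), softmax_code W.
Proof.
move=> d0 K2.
have c1 : compact (@OB R d K) by apply: mx_compact; [exact: OB_entries | exact: OB_closed].
have c2 := @OB_nonempty d K d0.
have c3 : forall W : 'M[R]_(d, K), OB W -> rho_ovr W <= 2.
  move=> W hW; have K0 : (0 < K)%N by lia.
  have [j hj] := exists_other (Ordinal K0) K2.
  apply: le_trans (rho_ovr_le W (Ordinal K0)) _.
  apply: le_trans (_ : norm2 (col (Ordinal K0) W - col j W) <= 2).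
    by apply: dist_le; exact: conv_mem.
  apply: norm2_le_sq => //; apply: le_trans (unit_diff_le2 (OB_col _ hW) (OB_col _ hW)) _.
  lra.
have c4 : forall (W : 'M[R]_(d, K)) r, rho_ovr W < r -> nbhs W [set W' | rho_ovr W' < r].
  by move=> W r; exact: rho_ovr_usc.
have [W hW Wmax] := usc_max c1 c2 c3 c4.
by exists W; split.
Qed.

Lemma exact_dual d K (W : 'M[R]_(d, K)) k : (0 < d)%N -> (2 <= K)%N -> OB W ->
  exists h, q h = 1 /\
  forall j, j != k -> dist_rest W k <= dotv (col k W - col j W) h.
Proof.
move=> d0 K2 hW.
have Ane : [set j : 'I_K | j != k] !=set0 by have [j hj] := exists_other k K2; exists j.
pose f := fun h : 'M[R]_(d, 1) =>
  inf [set dotv (col k W - col j W) h | j in [set j : 'I_K | j != k]].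
have [j0 hj0] := exists_other k K2.
have c1 : compact [set h : 'M[R]_(d, 1) | q h = 1].
  apply: mx_compact; last exact: sphere_closed.
  by move=> x hx i j; rewrite (ord1 j); exact: entry_le1.
have c2 : [set h : 'M[R]_(d, 1) | q h = 1] !=set0.
  by exists (@unitv R _ (Ordinal d0)); exact: (@unitv_q R).
have c3 : forall h : 'M[R]_(d, 1), q h = 1 -> f h <= norm2 (col k W - col j0 W).
  move=> h hh; apply: le_trans (cs_unit _ hh).
  exact: (@fin_inf_le _ _ [set j : 'I_K | j != k]).
have c4 : forall (h : 'M[R]_(d, 1)) r, f h < r -> nbhs h [set h' | f h' < r].
  move=> h r hr.
  have [j hj hjr] := fin_inf_lt Ane hr.
  have cj : continuous (fun h : 'M[R]_(d, 1) => dotv (col k W - col j W) h).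
    apply: (cont_dot (u := fun=> col k W - col j W) (v := fun h => h)) => i.
      exact: cst_continuous.
    exact: coord_continuous.
  apply: filterS (cont_lt cj hjr) => h' /= h'r.
  apply: le_lt_trans h'r.
  exact: (@fin_inf_le _ _ [set j : 'I_K | j != k]).
have [h hh hmax] := usc_max c1 c2 c3 c4.
exists h; split => // j hj.
apply: le_trans (_ : f h <= _); last exact: (@fin_inf_le _ _ [set j : 'I_K | j != k]).
apply/ler_addgt0Pr => e e0.
have [he [qhe Hhe]] := approx_dual k K2 hW e0.
have : dist_rest W k - e <= f he by apply: fin_inf_ge => // j' hj'; exact: Hhe.
have := hmax he qhe.
lra.
Qed.

End P9.

Section P10.
Variable R : realType.
Notation q v := (dotv v v).

Lemma sq_mono (x y : R) : 0 <= x -> 0 <= y -> x ^+ 2 / 2 <= y ^+ 2 / 2 -> x <= y.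
Proof.
move=> x0 y0 h; rewrite -(@ler_pXn2r _ 2) ?nnegrE //.
by move: h; rewrite ler_pM2r // invr_gt0.
Qed.

Lemma sq_mono2 (x y : R) : 0 <= x -> x <= y -> x ^+ 2 / 2 <= y ^+ 2 / 2.
Proof.
move=> x0 h; rewrite ler_pM2r ?invr_gt0 // ler_pXn2r // ?nnegrE //.
exact: le_trans h.
Qed.

Lemma softmax_hw d K n (W : 'M[R]_(d, K)) :
  (0 < d)%N -> (2 <= K)%N -> (0 < n)%N ->
  (forall W : 'M[R]_(d, K), softmax_code W -> forall k : 'I_K, ~ ovr_rattler W k) ->
  (forall (W : 'M[R]_(d, K)) (H : 'M[R]_(d, K * n)), HardMax_optimal W H ->
      forall (k : 'I_K) (i : 'I_n), hcol H k i = col k W) ->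
  softmax_code W ->
  forall k j, j != k -> rho_ovr W <= dotv (col k W - col j W) (col k W).
Proof.
move=> d0 K2 n0 noS Ha hS.
have [hW Wmax] := hS.
have hd : forall k, exists h, q h = 1 /\
    forall j, j != k -> dist_rest W k <= dotv (col k W - col j W) h.
  by move=> k; exact: exact_dual.
have [f hf] := choice hd.
pose H := mkH n f.
have hH : OB H by apply: mkH_OB => k; have [] := hf k.
have hL : L_HardMax W H <= - rho_ovr W.
  apply: mkH_L => // k j hj.
  rewrite -(not_ovr_rattler (noS W hS k)).
  by have [_ Hk] := hf k; exact: Hk.
have hopt : HardMax_optimal W H.
  split => //; split => // W' H' hW' hH'.
  apply: le_trans hL _; apply: le_trans (L_lower K2 n0 hW' hH').
  by rewrite lerN2; exact: Wmax.
move=> k j hj.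
have := Ha W H hopt k (Ordinal n0); rewrite mkH_col => Efk.
rewrite -[X in dotv _ X]Efk.
rewrite -(not_ovr_rattler (noS W hS k)).
by have [_ Hk] := hf k; exact: Hk.
Qed.

Lemma softmax_ovo d K (W : 'M[R]_(d, K)) : (2 <= K)%N -> OB W ->
  (forall k j, j != k -> rho_ovr W <= dotv (col k W - col j W) (col k W)) ->
  rho_ovr W <= rho_ovo W ^+ 2 / 2.
Proof.
move=> K2 hW H.
have S0 := rho_ovr_ge0 W K2.
have : Num.sqrt (2 * rho_ovr W) <= rho_ovo W.
  apply: rho_ovo_ge => // k k' hk.
  apply: norm2_ge_sq; first exact: sqrtr_ge0.
  rewrite sqr_sqrtr; last lra.
  have := H k k' hk; rewrite dot_diff_self; [lra | exact: OB_col | exact: OB_col].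
move=> h.
have := sq_mono2 (sqrtr_ge0 _) h; rewrite sqr_sqrtr; last lra.
lra.
Qed.

End P10.

Unset Implicit Arguments.
Set Strict Implicit.

Theorem mainTheorem8 (R : realType) (d K n : nat) :
  (1 <= d)%N -> (2 <= K)%N -> (1 <= n)%N ->
  (forall W : 'M[R]_(d, K), softmax_code W -> forall k : 'I_K, ~ ovr_rattler W k) ->
  (forall W : 'M[R]_(d, K), tammes_solution W -> forall k : 'I_K, ~ ovo_rattler W k) ->
  ((forall (W : 'M[R]_(d, K)) (H : 'M[R]_(d, K * n)), HardMax_optimal W H ->
      forall (k : 'I_K) (i : 'I_n), hcol H k i = col k W)
   <->
   @softmax_code R d K = @tammes_solution R d K).
Proof.
move=> d0 K2 n0 noS noT; split.
- move=> Ha.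
  have A2 : forall W : 'M[R]_(d, K), softmax_code W -> rho_ovr W <= rho_ovo W ^+ 2 / 2.
    move=> W hS; apply: softmax_ovo => //; first by case: hS.
    exact: (softmax_hw d0 K2 n0 noS Ha hS).
  have [W0 hW0] := @exists_softmax R d K d0 K2.
  apply/seteqP; split => W.
  + move=> hS; have [hW Wmax] := hS; split => // W' hW'.
    apply: sq_mono; [exact: rho_ovo_ge0 | exact: rho_ovo_ge0 |].
    apply: le_trans (ovo_le_ovr K2 hW') _.
    apply: le_trans (Wmax W' hW') _.
    exact: A2.
  + move=> [hW Wmax]; split => // W' hW'.
    have [hW0' W0max] := hW0.
    apply: le_trans (W0max W' hW') _.
    apply: le_trans (A2 W0 hW0) _.
    apply: le_trans (ovo_le_ovr K2 hW).
    apply: sq_mono2; first exact: rho_ovo_ge0.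
    exact: Wmax.
- move=> Hb W H [hW [hH hopt]] k i.
  have K0 : (0 < K)%N by lia.
  have claim : forall W' : 'M[R]_(d, K), OB W' -> forall e, 0 < e ->
      L_HardMax W H <= - (rho_ovr W' - e).
    move=> W' hW' e e0.
    have hd : forall k, exists h, dotv h h = 1 /\
        forall j, j != k -> dist_rest W' k - e <= dotv (col k W' - col j W') h.
      by move=> k'; exact: approx_dual.
    have [f hf] := choice hd.
    have hH' : OB (mkH n f) by apply: mkH_OB => k'; have [] := hf k'.
    apply: le_trans (hopt W' (mkH n f) hW' hH') _.
    apply: mkH_L => // k' j hj.
    have [_ Hf] := hf k'; apply: le_trans (Hf j hj).
    by rewrite lerD2r; exact: rho_ovr_le.
  have hLow := L_lower K2 n0 hW hH.
  have hS : softmax_code W.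
    split => // W' hW'; apply/ler_addgt0Pr => e e0.
    have := claim W' hW' e e0; lra.
  have hT : tammes_solution W by rewrite -Hb.
  pose S := rho_ovr W.
  have hLS : L_HardMax W H <= - S.
    apply/ler_addgt0Pr => e e0; have := claim W hW e e0; rewrite /S; lra.
  pose h := hcol H k i.
  have qh : dotv h h = 1 by exact: (OB_col _ hH).
  have hS1 : forall j, j != k -> S <= dotv (col k W - col j W) h.
    move=> j hj; have := L_ub W H i hj; rewrite dotv_opp_diff -/h; lra.
  pose T := rho_ovo W.
  have ST : S <= T ^+ 2 / 2.
    rewrite leNgt; apply/negP => lt.
    exact: (perturb K2 hT noT qh lt hS1).
  have S0 : 0 < S.
    rewrite lt_neqAle rho_ovr_ge0 // andbT; apply/eqP => S00.
    pose e := @unitv R _ (Ordinal d0).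
    have qe : dotv e e = 1 by exact: unitv_q.
    pose W0 := \matrix_(r < d, j < K) if j == k then e r 0 else - e r 0.
    have cW0 : forall j, col j W0 = if j == k then e else - e.
      move=> j; apply/matrixP => r c; rewrite ord1 !mxE.
      by case: (j == k); rewrite ?mxE.
    have hW0 : OB W0.
      move=> j; rewrite cW0; apply: unit_norm2.
      by case: (j == k); rewrite ?dotvNl ?dotvNr ?opprK.
    have r0 : 0 <= rho_ovr W0 := rho_ovr_ge0 W0 K2.
    have [_ Wmax] := hS.
    have sW0 : softmax_code W0.
      split => // W' hW'; apply: le_trans (Wmax W' hW') _; rewrite -/S -S00 //.
    have E := not_ovr_rattler (noS W0 sW0 k).
    have : 2 <= dist_rest W0 k.
      apply: (weak_dual (h := e)) => // j hj.
      rewrite !cW0 eqxx (negbTE hj) opprK dotvDl qe; lra.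
    have := Wmax W0 hW0; rewrite -/S -S00 E; lra.
  have Dk := not_ovr_rattler (noS W hS k).
  have D0 : 0 < dist_rest W k by rewrite Dk.
  have H1 : forall j, j != k -> dist_rest W k <= dotv (col k W - col j W) h.
    by move=> j hj; rewrite Dk; exact: hS1.
  have H2 : forall j, j != k -> dist_rest W k <= dotv (col k W - col j W) (col k W).
    move=> j hj; rewrite Dk dot_diff_self; [|exact: OB_col|exact: OB_col].
    have := sq_le_of_norm2 (rho_ovo_ge0 W K2) (rho_ovo_le_pair W hj).
    rewrite /S /T in ST; lra.
  exact: (uniq_dual K2 D0 qh (OB_col k hW) H1 H2).
Qed.
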